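(* Let $t\in\mathbb N$ and $N=\lvert t\rvert_{\mathtt{01}}$. Then $\frac34N\le v_t\le 5N$.
   Context: For $n\in\mathbb N=\{0,1,\dots\}$, $\lvert n\rvert_{\mathtt{01}}$ denotes the number of maximal blocks of $\mathtt 1$s in the binary expansion of $n$ (equivalently, the number of occurrences of $\mathtt{01}$ in the binary expansion padded with a leading $\mathtt 0$). Define $(v_t)_{t\in\mathbb N}$ by $v_0=0$, $v_1=3/2$, and for all $t\in\mathbb N$: $v_{4t}=v_{2t}$, $v_{4t+2}=v_{2t+1}+1$, $v_{2t+1}=\frac{v_t+v_{t+1}}2+\frac34$. *)

(* Defs.v *)
From mathcomp Require Import all_boot all_order all_algebra.
Set Implicit Arguments. Unset Strict Implicit. Unset Printing Implicit Defensive.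
Import Order.TTheory GRing.Theory Num.Theory.
Local Open Scope ring_scope.

Fixpoint bits_aux (fuel n : nat) : seq bool :=
  match fuel with
  | 0 => [::]
  | f.+1 => if n == 0%N then [::] else odd n :: bits_aux f n./2
  end.
Definition bits (n : nat) : seq bool := bits_aux n n.

(* |n|_01 : number of maximal blocks of 1s in the binary expansion of n,
   i.e. number of positions i with bit i = 1 and bit (i+1) = 0
   (bits beyond the expansion are 0). *)
Definition blocks01 (n : nat) : nat :=
  count (fun i => nth false (bits n) i && ~~ nth false (bits n) i.+1)
        (iota 0 (size (bits n))).

(* v_t, by the recursion v_0 = 0, v_1 = 3/2, v_{4t} = v_{2t},
   v_{4t+2} = v_{2t+1} + 1, v_{2t+1} = (v_t + v_{t+1})/2 + 3/4.
   The fuel argument f only guarantees termination; fuel t suffices. *)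
Fixpoint v_aux (f t : nat) : rat :=
  match f with
  | 0 => 0
  | f'.+1 =>
    if t == 0%N then 0
    else if t == 1%N then 3%:R / 2%:R
    else if odd t then
      (v_aux f' t./2 + v_aux f' t./2.+1) / 2%:R + 3%:R / 4%:R
    else if odd t./2 then
      v_aux f' t./2 + 1
    else v_aux f' t./2
  end.
Definition v (t : nat) : rat := v_aux t t.

(* Main.v *)
Require Import Defs.
From mathcomp Require Import all_boot all_order all_algebra.
From mathcomp Require Import zify ring lra.
Import Order.TTheory GRing.Theory Num.Theory.
Local Open Scope ring_scope.

Lemma v_aux_stable f g t : (t <= f)%N -> (t <= g)%N -> v_aux f t = v_aux g t.
Proof.
elim: f g t => [|f IH] [|g] t /=; try (move=> *; have -> : t = 0%N by lia); try done.
move=> hf hg.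
case: (t =P 0%N) => // t0; case: (t =P 1%N) => // t1.
have h1 : (t./2 <= f)%N by rewrite -divn2; lia.
have h2 : (t./2 <= g)%N by rewrite -divn2; lia.
case: ifP => ot.
  have h3 : (t./2.+1 <= f)%N.
    have := odd_double_half t; rewrite ot; lia.
  have h4 : (t./2.+1 <= g)%N.
    have := odd_double_half t; rewrite ot; lia.
  by rewrite (IH g) // (IH g t./2.+1).
by rewrite (IH g).
Qed.

Lemma v_auxE f t : (t <= f)%N -> v_aux f t = v t.
Proof. by move=> h; rewrite /v (@v_aux_stable f t t h). Qed.

Lemma v_aux_S f t : v_aux f.+1 t =
    if t == 0%N then 0
    else if t == 1%N then 3%:R / 2%:R
    else if odd t then
      (v_aux f t./2 + v_aux f t./2.+1) / 2%:R + 3%:R / 4%:R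
    else if odd t./2 then
      v_aux f t./2 + 1
    else v_aux f t./2.
Proof. by []. Qed.

Lemma v_eq t : (1 < t)%N -> v t =
    if odd t then (v t./2 + v t./2.+1) / 2%:R + 3%:R / 4%:R
    else if odd t./2 then v t./2 + 1 else v t./2.
Proof.
move=> h.
have -> : v t = v_aux t.-1.+1 t by rewrite prednK //; lia.
rewrite v_aux_S.
have /negPf -> : t != 0%N by lia.
have /negPf -> : t != 1%N by lia.
have h1 : (t./2 <= t.-1)%N by rewrite -divn2; lia.
rewrite (@v_auxE _ _ h1).
case: ifP => ot //.
have h3 : (t./2.+1 <= t.-1)%N by have := odd_double_half t; rewrite ot; lia.
by rewrite (@v_auxE _ _ h3).
Qed.

Lemma v_double t : v t.*2 = v t + (odd t)%:R.
Proof.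
case: t => [|t]; first by rewrite /v /= addr0.
rewrite v_eq; last by rewrite doubleS.
by rewrite odd_double doubleK; case: (odd _); rewrite ?addr0.
Qed.

Lemma v_odd t : v t.*2.+1 = (v t + v t.+1) / 2%:R + 3%:R / 4%:R.
Proof.
case: t => [|t].
  have -> : v 1 = 3%:R/2%:R by [].
  have -> : v 0 = 0 by [].
  lra.
rewrite v_eq; last by rewrite doubleS.
rewrite /= odd_double /=.
by rewrite uphalf_double.
Qed.

Lemma bits_aux_stable f g n : (n <= f)%N -> (n <= g)%N -> bits_aux f n = bits_aux g n.
Proof.
elim: f g n => [|f IH] [|g] n /=; try (move=> *; have -> : n = 0%N by lia); try done.
move=> hf hg; case: (n =P 0%N) => // n0.
have h1 : (n./2 <= f)%N by rewrite -divn2; lia.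
have h2 : (n./2 <= g)%N by rewrite -divn2; lia.
by rewrite (IH g).
Qed.

Lemma bits_eq n : (0 < n)%N -> bits n = odd n :: bits n./2.
Proof.
move=> h.
have -> : bits n = bits_aux n.-1.+1 n by rewrite prednK //; lia.
rewrite /=.
have /negPf -> : n != 0%N by lia.
have h1 : (n./2 <= n.-1)%N by rewrite -divn2; lia.
by rewrite /bits (@bits_aux_stable n.-1 n./2 n./2).
Qed.

Fixpoint blk (s : seq bool) : nat :=
  match s with [::] => 0%N | b :: s' => ((b && ~~ head false s') + blk s')%N end.

Lemma count_blk s :
  count (fun i => nth false s i && ~~ nth false s i.+1) (iota 0 (size s)) = blk s.
Proof.
elim: s => [|b s IH] //=.
rewrite -[1%N]/(1 + 0)%N iotaDl count_map -IH.
by rewrite (_ : nth false s 0 = head false s); last by case: (s).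

Qed.

Lemma blocks_blk n : blocks01 n = blk (bits n).
Proof. by rewrite /blocks01 count_blk. Qed.

Lemma head_bits n : head false (bits n) = odd n.
Proof. by case: n => [|n] //; rewrite bits_eq. Qed.

Lemma N_double n : blocks01 n.*2 = blocks01 n.
Proof.
case: n => [|n] //.
rewrite !blocks_blk bits_eq; last by rewrite doubleS.
by rewrite odd_double doubleK.
Qed.

Lemma N_odd n : blocks01 n.*2.+1 = (blocks01 n + ~~ odd n)%N.
Proof.
rewrite !blocks_blk bits_eq //= uphalf_double.
by rewrite odd_double head_bits addnC.
Qed.

Definition Inv (t : nat) : Prop :=
  let a := v t in let b := v t.+1 in
  let n := (blocks01 t)%:R in let m := (blocks01 t.+1)%:R in
  if odd t then
    (blocks01 t.+1 = blocks01 t /\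
      a - 5%:R * n <= - 1 /\ b - 5%:R * m <= - (5%:R / 2%:R) /\
      3%:R / 4%:R <= a - 3%:R/4%:R * n /\ 7%:R / 4%:R <= b - 3%:R/4%:R * m)
    \/
    ((blocks01 t.+1).+1 = blocks01 t /\
      a - 5%:R * n <= - (7%:R / 2%:R) /\ b - 5%:R * m <= 0 /\
      15%:R / 8%:R <= a - 3%:R/4%:R * n /\ 3%:R <= b - 3%:R/4%:R * m)
  else
    (blocks01 t.+1 = blocks01 t /\
      a - 5%:R * n <= 0 /\ b - 5%:R * m <= - 1 /\
      7%:R / 4%:R <= a - 3%:R/4%:R * n /\ 2%:R <= b - 3%:R/4%:R * m)
    \/
    (blocks01 t.+1 = (blocks01 t).+1 /\
      a - 5%:R * n <= 0 /\ b - 5%:R * m <= - (7%:R / 2%:R) /\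
      0 <= a - 3%:R/4%:R * n /\ 3%:R / 4%:R <= b - 3%:R/4%:R * m).

Lemma Inv_step s : Inv s -> Inv s.*2 /\ Inv s.*2.+1.
Proof.
have hv0 := v_double s.
have hv1 := v_odd s.
have hv2 := v_double s.+1. rewrite doubleS in hv2.
have hn0 := N_double s.
have hn1 := N_odd s.
have hn2 := N_double s.+1. rewrite doubleS in hn2.
rewrite /Inv hv0 hv1 hv2 hn0 hn1 hn2.
move: (odd_double s) (oddS s.*2) (oddS s).
set a := v s; set b := v s.+1; set n := blocks01 s; set m := blocks01 s.+1.
clearbody a b n m.
move=> -> -> ->.
case: (odd s) => /=; rewrite ?addn0 ?addn1 ?addr0.
  case=> [[-> [h1 [h2 [h3 h4]]]]|[<- [h1 [h2 [h3 h4]]]]];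
    rewrite -?[n.+1%:R]natr1 -?[m.+1%:R]natr1.
    by split; [left|left]; (split; [lia|]); lra.
  by split; [left|right]; (split; [lia|]); lra.
case=> [[-> [h1 [h2 [h3 h4]]]]|[-> [h1 [h2 [h3 h4]]]]];
  rewrite -?[n.+1%:R]natr1 -?[m.+1%:R]natr1.
  by split; [right|right]; (split; [lia|]); lra.
by split; [right|left]; (split; [lia|]); lra.
Qed.

Lemma Inv_all t : Inv t.
Proof.
elim/ltn_ind: t => t IH.
case: (posnP t) => [->|tp].
  right; split; first by [].
  have -> : v 1 = 3%:R/2%:R by [].
  have -> : v 0 = 0 by [].
  have -> : blocks01 1 = 1%N by [].
  have -> : blocks01 0 = 0%N by [].
  lra.
have ht := odd_double_half t.
have hlt : (t./2 < t)%N by rewrite -divn2; lia.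
have [H0 H1] := @Inv_step _ (IH _ hlt).
by case: (odd t) ht => /= <-; rewrite ?add0n.
Qed.

Theorem proposition3p11 (t : nat) :
  3%:R / 4%:R * (blocks01 t)%:R <= v t /\ v t <= 5%:R * (blocks01 t)%:R.
Proof.
have := Inv_all t; rewrite /Inv.
case: (odd t) => [[[_ [h1 [_ [h3 _]]]]|[_ [h1 [_ [h3 _]]]]]|[[_ [h1 [_ [h3 _]]]]|[_ [h1 [_ [h3 _]]]]]];
  split; lra.
Qed.
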